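(* Let $m$ be a number and $p\ge 0$ an integer, and suppose the ball $\langle m;-\frac{1}{2^p}\rangle$ is balanced. Then $\langle m;-\frac{1}{2^p}\rangle\mathbin{:}\underline{0}\triangleq\langle m;-\frac{1}{2^{p+1}}\rangle$, and $\langle m;-\frac{1}{2^{p+1}}\rangle$ is also balanced.
   Context: Games are short normal-play combinatorial games, written $\{L\mid R\}$, with disjunctive sum $G+H\cong\{L(G)+H,G+L(H)\mid R(G)+H,G+R(H)\}$ and negation $-G\cong\{-R(G)\mid-L(G)\}$. Ordinal sum: $G\mathbin{:}H\cong\{L(G),\,G\mathbin{:}L(H)\mid R(G),\,G\mathbin{:}R(H)\}$. A number is a game with $G^L<G<G^R$ for all options; values are dyadic rationals. For numbers $m,\Delta$, the ball $\langle m;\Delta\rangle$ is the game $\{x\mid y\}$ with $x,y$ the canonical forms of $m+\Delta$, $m-\Delta$; it is balanced if $\langle m;\Delta\rangle+\langle m;\Delta\rangle=m+m$. $\underline{0}$ is the literal game $1+(-1)\cong\{-1\mid 1\}$ (canonical $1\cong\{0\mid\}$, $-1\cong\{\mid 0\}$). Equivalence modulo domination: $G\triangleq H$ means that in $G+(-H)$, for every move by either player as first player in one summand, the other player has a response in the other summand after which the responder wins. *)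

(* Defs.v *)
From Stdlib Require List.
From mathcomp Require Import all_boot all_order all_algebra.
Set Implicit Arguments. Unset Strict Implicit. Unset Printing Implicit Defensive.
Import Order.TTheory GRing.Theory Num.Theory.

Inductive game : Type := Game of seq game & seq game.

Definition leftopts (G : game) : seq game := let: Game L _ := G in L.
Definition rightopts (G : game) : seq game := let: Game _ R := G in R.

(* win G = (Left moving first wins G, Right moving first wins G),
   under normal play (a player with no move loses). *)
Fixpoint win (G : game) : bool * bool :=
  let: Game L R := G in
  (has (fun GL => ~~ (win GL).2) L, has (fun GR => ~~ (win GR).1) R).

Definition lwins_first (G : game) : bool := (win G).1.
Definition rwins_first (G : game) : bool := (win G).2.

Fixpoint gadd (G : game) : game -> game :=
  fix gaddG (H : game) : game :=
  match G, H with
  | Game GL GR, Game HL HR =>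
      Game ([seq gadd gl H | gl <- GL] ++ [seq gaddG hl | hl <- HL])
           ([seq gadd gr H | gr <- GR] ++ [seq gaddG hr | hr <- HR])
  end.

Fixpoint gneg (G : game) : game :=
  let: Game L R := G in Game [seq gneg gr | gr <- R] [seq gneg gl | gl <- L].

Fixpoint gord (G : game) (H : game) : game :=
  let: Game HL HR := H in
  Game (leftopts G ++ [seq gord G hl | hl <- HL])
       (rightopts G ++ [seq gord G hr | hr <- HR]).

Definition geq (G H : game) : Prop :=
  ~~ lwins_first (gadd G (gneg H)) /\ ~~ rwins_first (gadd G (gneg H)).

(* Equivalence modulo domination G ≜ H: in G + (-H), for every move by either
   player as first player in one summand, the other player has a response in
   the other summand after which the responder wins (i.e. the original first
   player, now to move, loses). *)
Definition eqdom (G H : game) : Prop :=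
  (forall gl, List.In gl (leftopts G) -> exists2 x, List.In x (rightopts (gneg H)) &
        ~~ lwins_first (gadd gl x)) /\
  (forall gr, List.In gr (rightopts G) -> exists2 y, List.In y (leftopts (gneg H)) &
        ~~ rwins_first (gadd gr y)) /\
  (forall y, List.In y (leftopts (gneg H)) -> exists2 gr, List.In gr (rightopts G) &
        ~~ lwins_first (gadd gr y)) /\
  (forall x, List.In x (rightopts (gneg H)) -> exists2 gl, List.In gl (leftopts G) &
        ~~ rwins_first (gadd gl x)).

Local Open Scope ring_scope.

Definition gzero : game := Game [::] [::].

(* canonical form of an integer: n+1 = {n|}, -(n+1) = {|-n} *)
Definition canon_int (n : int) : game :=
  match n with
  | Posz k => iter k (fun g => Game [:: g] [::]) gzero
  | Negz k => iter k.+1 (fun g => Game [::] [:: g]) gzero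
  end.

Fixpoint canon_dy (a : int) (k : nat) : game :=
  match k with
  | 0%N => canon_int a
  | k'.+1 =>
      if odd `|a|%N then
        Game [:: canon_dy ((a - 1) %/ 2)%Z k'] [:: canon_dy ((a + 1) %/ 2)%Z k']
      else canon_dy (a %/ 2)%Z k'
  end.

Definition dyadic (q : rat) : Prop := exists k : nat, denq q = (2 ^ k)%:Z.

Definition canon (q : rat) : game := canon_dy (numq q) (logn 2 `|denq q|%N).

Definition ball (m D : rat) : game := Game [:: canon (m + D)] [:: canon (m - D)].

Definition balanced (m D : rat) : Prop :=
  geq (gadd (ball m D) (ball m D)) (gadd (canon m) (canon m)).

(* the literal game 0-underline = 1 + (-1) = {-1 | 1} *)
Definition gone : game := Game [:: gzero] [::].
Definition gmone : game := Game [::] [:: gzero].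
Definition zero_ul : game := Game [:: gmone] [:: gone].

(* Main.v *)
Require Import Defs.
From mathcomp Require Import all_boot all_order all_algebra.
From mathcomp Require Import zify ring lra.
From Stdlib Require List.
Set Implicit Arguments. Unset Strict Implicit. Unset Printing Implicit Defensive.
Import Order.TTheory GRing.Theory Num.Theory.
Local Open Scope ring_scope.

Notation lw := lwins_first.
Notation rw := rwins_first.

Lemma lwE L R : lw (Game L R) = has (fun g => ~~ rw g) L. Proof. by []. Qed.
Lemma rwE L R : rw (Game L R) = has (fun g => ~~ lw g) R. Proof. by []. Qed.

Lemma gaddE a b c d : gadd (Game a b) (Game c d) =
  Game ([seq gadd g (Game c d) | g <- a] ++ [seq gadd (Game a b) h | h <- c])
       ([seq gadd g (Game c d) | g <- b] ++ [seq gadd (Game a b) h | h <- d]).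
Proof. by []. Qed.

Lemma gnegE L R : gneg (Game L R) = Game (map gneg R) (map gneg L).
Proof. by []. Qed.

Definition game_ind' (P : game -> Prop)
  (H : forall L R, (forall g, List.In g L -> P g) -> (forall g, List.In g R -> P g) -> P (Game L R)) :
  forall G, P G :=
  fix IH G := match G with Game L R => H L R
     ((fix F (l : seq game) : forall g, List.In g l -> P g :=
        match l return forall g, List.In g l -> P g with
        | [::] => fun g (i : List.In g [::]) => False_ind _ i
        | x :: l' => fun g (i : List.In g (x :: l')) =>
            match i with or_introl e => eq_ind x P (IH x) g e | or_intror i' => F l' g i' end
        end) L)
     ((fix F (l : seq game) : forall g, List.In g l -> P g :=
        match l return forall g, List.In g l -> P g with
        | [::] => fun g (i : List.In g [::]) => False_ind _ i
        | x :: l' => fun g (i : List.In g (x :: l')) =>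
            match i with or_introl e => eq_ind x P (IH x) g e | or_intror i' => F l' g i' end
        end) R) end.

Inductive iso : game -> game -> Prop :=
 IsoI L R L' R' :
   (forall g, List.In g L -> exists2 h, List.In h L' & iso g h) ->
   (forall h, List.In h L' -> exists2 g, List.In g L & iso g h) ->
   (forall g, List.In g R -> exists2 h, List.In h R' & iso g h) ->
   (forall h, List.In h R' -> exists2 g, List.In g R & iso g h) ->
   iso (Game L R) (Game L' R').

Lemma In_cat (T : Type) (x : T) s1 s2 : List.In x (s1 ++ s2) <-> List.In x s1 \/ List.In x s2.
Proof. elim: s1 => [|y s IH] /=; [tauto|rewrite IH; tauto]. Qed.

Lemma In_map (T U : Type) (f : T -> U) y s : List.In y (map f s) <-> exists2 x, List.In x s & y = f x.
Proof.
elim: s y => [|x s IH] y /=; first by split=> // -[].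
split.
- case=> [<-|/IH [z zs ->]]; [by exists x => //; left | by exists z => //; right].
- by case=> z [<-|zs] ->; [left | right; apply/IH; exists z].
Qed.

Lemma hasIn (T : Type) (p : pred T) s : has p s <-> exists2 x, List.In x s & p x.
Proof.
elim: s => [|x s IH] /=; first by split=> // -[].
split.
- by case/orP=> [px|/IH [y ys py]]; [exists x => //; left | exists y => //; right].
- by case=> y [<-|ys] py; apply/orP; [left | right; apply/IH; exists y].
Qed.

Lemma allIn (T : Type) (p : pred T) s : all p s <-> forall x, List.In x s -> p x.
Proof.
elim: s => [|x s IH] //=; split.
- by case/andP=> px /IH ps y [<-|ys]; [exact: px | exact: ps].
- by move=> H; apply/andP; split; [apply: H; left | apply/IH => y ys; apply: H; right].
Qed.

Lemma map_ext_In (T U : Type) (f g : T -> U) s : (forall x, List.In x s -> f x = g x) -> map f s = map g s.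
Proof. elim: s => //= x s IH H; rewrite H ?IH //; [move=> y ys; apply: H; right | left] => //. Qed.

Lemma has_ext_In (T : Type) (p q : pred T) s : (forall x, List.In x s -> p x = q x) -> has p s = has q s.
Proof. elim: s => //= x s IH H; rewrite H ?IH //; [move=> y ys; apply: H; right | left] => //. Qed.

Definition liso (L L' : seq game) :=
  (forall g, List.In g L -> exists2 h, List.In h L' & iso g h) /\
  (forall h, List.In h L' -> exists2 g, List.In g L & iso g h).

Lemma isoE L R L' R' : iso (Game L R) (Game L' R') <-> liso L L' /\ liso R R'.
Proof.
split; first by move=> H; inversion H; subst; split; split.
by case=> [[? ?] [? ?]]; constructor.
Qed.

Lemma iso_refl G : iso G G.
Proof.
elim/game_ind': G => L R IL IR; apply/isoE; split; split.
- by move=> g gi; exists g => //; apply: IL.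
- by move=> g gi; exists g => //; apply: IL.
- by move=> g gi; exists g => //; apply: IR.
- by move=> g gi; exists g => //; apply: IR.
Qed.

Lemma iso_sym G H : iso G H -> iso H G.
Proof.
elim/game_ind': G H => L R IL IR [L' R'] /isoE [[a b] [c d]]; apply/isoE; split; split.
- by move=> h /b [g gi ig]; exists g => //; apply: IL.
- by move=> g gi; have [h hi ig] := a g gi; exists h => //; apply: IL.
- by move=> h /d [g gi ig]; exists g => //; apply: IR.
- by move=> g gi; have [h hi ig] := c g gi; exists h => //; apply: IR.
Qed.

Lemma iso_trans G H K : iso G H -> iso H K -> iso G K.
Proof.
elim/game_ind': G H K => L R IL IR [L1 R1] [L2 R2] /isoE [[a b] [c d]] /isoE [[a' b'] [c' d']].
apply/isoE; split; split.
- by move=> g gi; have [h /a' [k ki hk] gh] := a g gi; exists k => //; apply: (IL g gi _ _ gh hk).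
- by move=> k /b' [h /b [g gi gh] hk]; exists g => //; apply: (IL g gi _ _ gh hk).
- by move=> g gi; have [h /c' [k ki hk] gh] := c g gi; exists k => //; apply: (IR g gi _ _ gh hk).
- by move=> k /d' [h /d [g gi gh] hk]; exists g => //; apply: (IR g gi _ _ gh hk).
Qed.

Lemma liso_trans a b c : liso a b -> liso b c -> liso a c.
Proof.
case=> [x y] [z w]; split.
- by move=> g /x [h /z [k ki hk] gh]; exists k => //; apply: iso_trans gh hk.
- by move=> k /w [h /y [g gi gh] hk]; exists g => //; apply: iso_trans gh hk.
Qed.

Lemma liso_cat a b a' b' : liso a a' -> liso b b' -> liso (a ++ b) (a' ++ b').
Proof.
case=> [x y] [z w]; split.
- move=> g /In_cat [/x|/z] [h hi gh]; exists h => //; apply/In_cat; tauto.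
- move=> h /In_cat [/y|/w] [g gi gh]; exists g => //; apply/In_cat; tauto.
Qed.

Lemma liso_catC a b : liso (a ++ b) (b ++ a).
Proof.
split.
- move=> g gi; exists g; [apply/In_cat; move/In_cat: gi; tauto | exact: iso_refl].
- move=> g gi; exists g; [apply/In_cat; move/In_cat: gi; tauto | exact: iso_refl].
Qed.

Lemma liso_map (T : Type) (f g : T -> game) s : (forall x, List.In x s -> iso (f x) (g x)) ->
  liso (map f s) (map g s).
Proof.
move=> H; split.
- by move=> y /In_map [x xs ->]; exists (g x); [apply/In_map; exists x|apply: H].
- by move=> y /In_map [x xs ->]; exists (f x); [apply/In_map; exists x|apply: H].
Qed.

Lemma iso_win G H : iso G H -> win G = win H.
Proof.
elim/game_ind': G H => L R IL IR [L' R'] /isoE [[a b] [c d]].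
have e1 : has (fun g => ~~ rw g) L = has (fun g => ~~ rw g) L'.
  apply/idP/idP => /hasIn [g gi pg].
  - have [h hi gh] := a g gi; apply/hasIn; exists h => //; by rewrite /rw -(IL _ gi _ gh).
  - have [h hi gh] := b g gi; apply/hasIn; exists h => //; by rewrite /rw (IL _ hi _ gh).
have e2 : has (fun g => ~~ lw g) R = has (fun g => ~~ lw g) R'.
  apply/idP/idP => /hasIn [g gi pg].
  - have [h hi gh] := c g gi; apply/hasIn; exists h => //; by rewrite /lw -(IR _ gi _ gh).
  - have [h hi gh] := d g gi; apply/hasIn; exists h => //; by rewrite /lw (IR _ hi _ gh).
by rewrite /= -/rw -/lw e1 e2.
Qed.

Lemma iso_addC G H : iso (gadd G H) (gadd H G).
Proof.
elim/game_ind': G H => GL GR IL IR; elim/game_ind' => HL HR JL JR.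
rewrite !gaddE; apply/isoE; split; (apply: liso_trans; last exact: liso_catC);
  apply: liso_cat; apply: liso_map => x xi; auto.
Qed.

Lemma iso_add G G' H H' : iso G G' -> iso H H' -> iso (gadd G H) (gadd G' H').
Proof.
elim/game_ind': G G' H H' => GL GR IL IR [GL' GR'] H H' isoG.
elim/game_ind': H H' => HL HR JL JR [HL' HR'] isoH.
move/isoE: (isoG) => [[a b] [c d]]; move/isoE: (isoH) => [[a' b'] [c' d']].
rewrite !gaddE; apply/isoE; split; split.
- move=> g /In_cat [/In_map [x xi ->]|/In_map [x xi ->]].
  + have [y yi xy] := a x xi; exists (gadd y (Game HL' HR')); last exact: IL.
    by apply/In_cat; left; apply/In_map; exists y.
  + have [y yi xy] := a' x xi; exists (gadd (Game GL' GR') y); last exact: JL.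
    by apply/In_cat; right; apply/In_map; exists y.
- move=> g /In_cat [/In_map [x xi ->]|/In_map [x xi ->]].
  + have [y yi xy] := b x xi; exists (gadd y (Game HL HR)); last exact: IL.
    by apply/In_cat; left; apply/In_map; exists y.
  + have [y yi xy] := b' x xi; exists (gadd (Game GL GR) y); last exact: JL.
    by apply/In_cat; right; apply/In_map; exists y.
- move=> g /In_cat [/In_map [x xi ->]|/In_map [x xi ->]].
  + have [y yi xy] := c x xi; exists (gadd y (Game HL' HR')); last exact: IR.
    by apply/In_cat; left; apply/In_map; exists y.
  + have [y yi xy] := c' x xi; exists (gadd (Game GL' GR') y); last exact: JR.
    by apply/In_cat; right; apply/In_map; exists y.
- move=> g /In_cat [/In_map [x xi ->]|/In_map [x xi ->]].
  + have [y yi xy] := d x xi; exists (gadd y (Game HL HR)); last exact: IR.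
    by apply/In_cat; left; apply/In_map; exists y.
  + have [y yi xy] := d' x xi; exists (gadd (Game GL GR) y); last exact: JR.
    by apply/In_cat; right; apply/In_map; exists y.
Qed.

Lemma iso_addA G H K : iso (gadd (gadd G H) K) (gadd G (gadd H K)).
Proof.
elim/game_ind': G H K => GL GR IL IR.
elim/game_ind' => HL HR JL JR.
elim/game_ind' => KL KR ML MR.
rewrite !gaddE; apply/isoE; rewrite !map_cat -!map_comp -!catA; split;
  repeat apply: liso_cat; apply: liso_map => x xi /=; rewrite -?gaddE; auto.
Qed.

Lemma gneg_add G H : gneg (gadd G H) = gadd (gneg G) (gneg H).
Proof.
elim/game_ind': G H => GL GR IL IR; elim/game_ind' => HL HR JL JR.
rewrite [gneg (Game GL GR)]gnegE [gneg (Game HL HR)]gnegE !gaddE gnegE !map_cat -!map_comp.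
congr (Game (_ ++ _) (_ ++ _)); apply: map_ext_In => x xi /=; rewrite -?gnegE.
- by rewrite IR.
- by rewrite JR.
- by rewrite IL.
- by rewrite JL.
Qed.

Lemma gneg_neg G : gneg (gneg G) = G.
Proof.
elim/game_ind': G => L R IL IR; rewrite !gnegE -!map_comp.
congr Game; rewrite -[X in _ = X]map_id; apply: map_ext_In => x xi /=; auto.
Qed.

Lemma win_neg G : lw (gneg G) = rw G /\ rw (gneg G) = lw G.
Proof.
elim/game_ind': G => L R IL IR; rewrite gnegE lwE rwE lwE rwE !has_map.
split; apply: has_ext_In => x xi /=.
- by case: (IR x xi) => _ ->.
- by case: (IL x xi) => ->.
Qed.

Lemma lw_neg G : lw (gneg G) = rw G. Proof. by case: (win_neg G). Qed.
Lemma rw_neg G : rw (gneg G) = lw G. Proof. by case: (win_neg G). Qed.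

Lemma iso_neg G H : iso G H -> iso (gneg G) (gneg H).
Proof.
elim/game_ind': G H => L R IL IR [L' R'] /isoE [[a b] [c d]]; rewrite !gnegE; apply/isoE.
split; split.
- move=> g /In_map [x xi ->]; have [y yi xy] := c x xi; exists (gneg y); last exact: IR.
  by apply/In_map; exists y.
- move=> g /In_map [x xi ->]; have [y yi xy] := d x xi; exists (gneg y); last exact: IR.
  by apply/In_map; exists y.
- move=> g /In_map [x xi ->]; have [y yi xy] := a x xi; exists (gneg y); last exact: IL.
  by apply/In_map; exists y.
- move=> g /In_map [x xi ->]; have [y yi xy] := b x xi; exists (gneg y); last exact: IL.
  by apply/In_map; exists y.
Qed.

Lemma rw_addE GL GR HL HR : rw (gadd (Game GL GR) (Game HL HR)) =
  has (fun g => ~~ lw (gadd g (Game HL HR))) GR || has (fun h => ~~ lw (gadd (Game GL GR) h)) HR.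
Proof. by rewrite gaddE rwE has_cat !has_map. Qed.

Lemma lw_addE GL GR HL HR : lw (gadd (Game GL GR) (Game HL HR)) =
  has (fun g => ~~ rw (gadd g (Game HL HR))) GL || has (fun h => ~~ rw (gadd (Game GL GR) h)) HL.
Proof. by rewrite gaddE lwE has_cat !has_map. Qed.

Record SL G H : Prop := MkSL {
  sla : ~~ rw G -> ~~ rw H -> ~~ rw (gadd G H);
  slb : ~~ lw G -> ~~ lw H -> ~~ lw (gadd G H);
  slc : lw G -> ~~ rw H -> lw (gadd G H);
  slc' : ~~ rw G -> lw H -> lw (gadd G H);
  sld : rw G -> ~~ lw H -> rw (gadd G H);
  sld' : ~~ lw G -> rw H -> rw (gadd G H) }.

Lemma sum_lemmas G H : SL G H.
Proof.
elim/game_ind': G H => GL GR IL IR; elim/game_ind' => HL HR JL JR.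
split; rewrite ?rw_addE ?lw_addE ?rwE ?lwE.
- rewrite !negb_or -!all_predC => /allIn a1 /allIn a2; apply/andP; split; apply/allIn => x xi /=;
  rewrite negbK.
  + have := a1 x xi; rewrite /= negbK => lx. case: (IR x xi (Game HL HR)) => _ _ h _ _ _.
    by apply: h => //; rewrite rwE -all_predC; apply/allIn => y yi; apply: a2.
  + have := a2 x xi; rewrite /= negbK => lx. case: (JR x xi) => _ _ _ h _ _.
    by apply: h => //; rewrite rwE -all_predC; apply/allIn => y yi; apply: a1.
- rewrite !negb_or -!all_predC => /allIn a1 /allIn a2; apply/andP; split; apply/allIn => x xi /=;
  rewrite negbK.
  + have := a1 x xi; rewrite /= negbK => lx. case: (IL x xi (Game HL HR)) => _ _ _ _ h _.
    by apply: h => //; rewrite lwE -all_predC; apply/allIn => y yi; apply: a2.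
  + have := a2 x xi; rewrite /= negbK => lx. case: (JL x xi) => _ _ _ _ _ h.
    by apply: h => //; rewrite lwE -all_predC; apply/allIn => y yi; apply: a1.
- move=> /hasIn [x xi px] hr; apply/orP; left; apply/hasIn; exists x => //.
  case: (IL x xi (Game HL HR)) => h _ _ _ _ _; exact: h.
- move=> hr /hasIn [x xi px]; apply/orP; right; apply/hasIn; exists x => //.
  case: (JL x xi) => h _ _ _ _ _; exact: h.
- move=> /hasIn [x xi px] hr; apply/orP; left; apply/hasIn; exists x => //.
  case: (IR x xi (Game HL HR)) => _ h _ _ _ _; exact: h.
- move=> hr /hasIn [x xi px]; apply/orP; right; apply/hasIn; exists x => //.
  case: (JR x xi) => _ h _ _ _ _; exact: h.
Qed.

Lemma mirror G : ~~ lw (gadd G (gneg G)) /\ ~~ rw (gadd G (gneg G)).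
Proof.
elim/game_ind': G => L R IL IR; rewrite gnegE lw_addE rw_addE !negb_or -!all_predC.
split; apply/andP; split; apply/allIn => x xi; apply/negPn.
- case: x xi => [a b] xi; rewrite rw_addE; apply/orP; right; rewrite has_map; apply/hasIn.
  by exists (Game a b) => //; exact: (proj1 (IL _ xi)).
- case/In_map: xi => y yi ->; case: y yi => [a b] yi; rewrite [gneg (Game a b)]gnegE rw_addE.
  apply/orP; left; apply/hasIn; exists (Game a b) => //; rewrite -gnegE; exact: (proj1 (IR _ yi)).
- case: x xi => [a b] xi; rewrite lw_addE; apply/orP; right; rewrite has_map; apply/hasIn.
  by exists (Game a b) => //; exact: (proj2 (IR _ xi)).
- case/In_map: xi => y yi ->; case: y yi => [a b] yi; rewrite [gneg (Game a b)]gnegE lw_addE.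
  apply/orP; left; apply/hasIn; exists (Game a b) => //; rewrite -gnegE; exact: (proj2 (IL _ yi)).
Qed.

Lemma zero_add X Z : ~~ lw Z -> ~~ rw Z -> lw (gadd X Z) = lw X /\ rw (gadd X Z) = rw X.
Proof.
move=> zl zr; have S := sum_lemmas X Z; split.
- by case: (boolP (lw X)) => h; [apply: (slc S) | apply/negbTE; apply: (slb S)].
- by case: (boolP (rw X)) => h; [apply: (sld S) | apply/negbTE; apply: (sla S)].
Qed.

Definition le G H := ~~ rw (gadd H (gneg G)).

Lemma iso_lw G H : iso G H -> lw G = lw H.
Proof. by move/iso_win; rewrite /lwins_first => ->. Qed.
Lemma iso_rw G H : iso G H -> rw G = rw H.
Proof. by move/iso_win; rewrite /rwins_first => ->. Qed.

Lemma le_lw G H : ~~ lw (gadd G (gneg H)) = le G H.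
Proof.
by rewrite /le -rw_neg gneg_add gneg_neg (iso_rw (iso_addC _ _)).
Qed.

Lemma le_rec GL GR HL HR : le (Game GL GR) (Game HL HR) =
  all (fun gl => ~~ le (Game HL HR) gl) GL && all (fun hr => ~~ le hr (Game GL GR)) HR.
Proof.
rewrite [le (Game GL GR) _]/le [gneg (Game GL GR)]gnegE rw_addE negb_or has_map andbC -!all_predC.
congr andb; apply: eq_all => x; cbv beta; rewrite -le_lw negbK; exact: negbK.
Qed.

Lemma gle_refl G : le G G.
Proof. exact: (proj2 (mirror G)). Qed.

Lemma iso4a a b c d : iso (gadd (gadd a b) (gadd c d)) (gadd (gadd a d) (gadd c b)).
Proof.
apply: iso_trans (iso_addA _ _ _) _.
apply: iso_trans; last exact: iso_sym (iso_addA _ _ _).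
apply: iso_add; first exact: iso_refl.
apply: iso_trans (iso_sym (iso_addA _ _ _)) _.
apply: iso_trans (iso_addC _ _) _.
apply: iso_add; first exact: iso_refl.
exact: iso_addC.
Qed.

Lemma iso4b a b c d : iso (gadd (gadd a b) (gadd c d)) (gadd (gadd a c) (gadd b d)).
Proof.
apply: iso_trans (iso_addA _ _ _) _.
apply: iso_trans; last exact: iso_sym (iso_addA _ _ _).
apply: iso_add; first exact: iso_refl.
apply: iso_trans (iso_sym (iso_addA _ _ _)) _.
apply: iso_trans; last exact: iso_addA.
apply: iso_add; last exact: iso_refl.
exact: iso_addC.
Qed.

Lemma gle_trans G H K : le G H -> le H K -> le G K.
Proof.
rewrite /le => h1 h2.
have := sla (sum_lemmas (gadd K (gneg H)) (gadd H (gneg G))) h2 h1.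
rewrite (iso_rw (iso4a _ _ _ _)).
by case: (zero_add (gadd K (gneg G)) (proj1 (mirror H)) (proj2 (mirror H))) => _ ->.
Qed.

Lemma le_iso G G' H H' : iso G G' -> iso H H' -> le G H = le G' H'.
Proof. by move=> a b; rewrite /le (iso_rw (iso_add b (iso_neg a))). Qed.

Lemma le_addr G H K : le (gadd G K) (gadd H K) = le G H.
Proof.
rewrite /le gneg_add (iso_rw (iso4b _ _ _ _)).
by case: (zero_add (gadd H (gneg G)) (proj1 (mirror K)) (proj2 (mirror K))) => _ ->.
Qed.

Lemma le_addl G H K : le (gadd K G) (gadd K H) = le G H.
Proof. by rewrite (le_iso (iso_addC _ _) (iso_addC _ _)) le_addr. Qed.

Lemma balancedE G M : (~~ lw (gadd G (gneg M)) /\ ~~ rw (gadd G (gneg M))) <-> (le G M /\ le M G).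
Proof. by rewrite le_lw. Qed.

Definition expo (q : rat) : nat := logn 2 `|denq q|.
Definition isint2 (q : rat) (j : nat) := exists z : int, q * 2 ^+ j = z%:~R.

Lemma two_pow k : (2 ^+ k : rat) = ((2 ^ k)%N%:Z)%:~R.
Proof. by rewrite -natrX. Qed.

Lemma two_pow_gt0 k : 0 < (2 ^+ k : rat).
Proof. exact: exprn_gt0. Qed.

Lemma two_pow_neq0 k : (2 ^+ k : rat) != 0.
Proof. by rewrite gt_eqF // two_pow_gt0. Qed.

Lemma odd_int (a : int) : odd `|a|%N -> exists w : int, a = 2 * w + 1.
Proof. case: a => n h; [exists (n./2)%:Z | exists (- (n./2)%:Z - 1)]; lia. Qed.

Lemma even_int (a : int) : ~~ odd `|a|%N -> exists w : int, a = 2 * w.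
Proof. case: a => n h; [exists (n./2)%:Z | exists (- (n.+1./2)%:Z)]; lia. Qed.

Lemma odd_frac (a : int) k : odd `|a|%N ->
  numq (a%:~R / 2 ^+ k) = a /\ denq (a%:~R / 2 ^+ k) = (2 ^ k)%N%:Z.
Proof.
move=> ha.
have cop : coprime `|a| `|(2 ^ k)%N%:Z|.
  rewrite absz_nat; case: k => [|k]; first by rewrite expn0 coprimen1.
  by rewrite coprime_pexpr // coprimen2.
rewrite two_pow coprimeq_num // coprimeq_den //; split.
  by rewrite gtr0_sg ?mul1r // ltz_nat expn_gt0.
have h : 0 < (2 ^ k)%N%:Z by rewrite ltz_nat expn_gt0.
by rewrite gt_eqF // gtr0_norm.
Qed.

Lemma odd_expo q (a : int) k : odd `|a|%N -> q * 2 ^+ k = a%:~R -> dyadic q /\ expo q = k.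
Proof.
move=> ha hq; have -> : q = a%:~R / 2 ^+ k by rewrite -hq mulfK // two_pow_neq0.
case: (odd_frac k ha) => _ hd; split; first by exists k.
by rewrite /expo hd absz_nat pfactorK.
Qed.

Lemma isint2_dy q j : isint2 q j -> dyadic q /\ (expo q <= j)%N.
Proof.
elim: j q => [|j IH] q [z hz].
  rewrite expr0 mulr1 in hz; rewrite hz /dyadic /expo denq_int; split => //.
  by exists 0%N.
case: (boolP (odd `|z|%N)) => hodd.
  by case: (odd_expo hodd hz) => d ->.
case: (even_int hodd) => w hw.
have : isint2 q j.
  exists w; apply: (mulIf (x := 2)) => //.
  by rewrite -mulrA -exprSr hz hw intrM mulrC.
by case/IH => d e; split => //; apply: leqW.
Qed.

Lemma dy_isint2 q : dyadic q -> isint2 q (expo q).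
Proof.
case=> k hk; exists (numq q); rewrite numqE hk /expo hk absz_nat pfactorK //.
by rewrite two_pow.
Qed.

Lemma isint2_le q j j' : isint2 q j -> (j <= j')%N -> isint2 q j'.
Proof.
case=> z hz /subnKC <-; exists (z * (2 ^ (j' - j))%N%:Z).
by rewrite exprD mulrA hz intrM -two_pow.
Qed.

Lemma isint2D x y j : isint2 x j -> isint2 y j -> isint2 (x + y) j.
Proof. by case=> a ha [b hb]; exists (a + b); rewrite mulrDl ha hb intrD. Qed.

Lemma isint2N x j : isint2 x j -> isint2 (- x) j.
Proof. by case=> a ha; exists (- a); rewrite mulNr ha intrN. Qed.

Lemma isint2_unit j : isint2 (1 / 2 ^+ j) j.
Proof. by exists 1; rewrite mul1r mulVf // two_pow_neq0. Qed.

Lemma isint2_int (z : int) j : isint2 z%:~R j.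
Proof. by exists (z * (2 ^ j)%N%:Z); rewrite intrM -two_pow. Qed.

Lemma isint2_step x y n : isint2 x n -> isint2 y n -> x < y -> x + 1 / 2 ^+ n <= y.
Proof.
case=> a ha [b hb] xy.
have t0 := two_pow_gt0 n.
have : x * 2 ^+ n < y * 2 ^+ n by rewrite ltr_pM2r.
rewrite ha hb ltr_int => ab.
have : (a + 1)%:~R <= b%:~R :> rat by rewrite ler_int; lia.
rewrite intrD -ha -hb => h.
rewrite -(ler_pM2r t0) mulrDl mul1r mulVf ?two_pow_neq0 //.
Qed.

Lemma canon_int_eq (a : int) : canon a%:~R = canon_int a.
Proof. by rewrite /canon numq_int denq_int. Qed.

Lemma canon_dy_canon k (a : int) : canon_dy a k = canon (a%:~R / 2 ^+ k).
Proof.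
elim: k a => [|k IH] a; first by rewrite expr0 divr1 canon_int_eq.
case: (boolP (odd `|a|%N)) => ha.
  rewrite /canon; case: (odd_frac k.+1 ha) => -> ->.
  by rewrite absz_nat pfactorK.
case: (even_int ha) => w hw.
rewrite /= (negPf ha) IH; congr canon.
have -> : (a %/ 2)%Z = w by rewrite hw mulrC mulzK.
rewrite hw intrM exprSr; field.
by rewrite two_pow_neq0.
Qed.

Definition lopt (q : rat) : seq rat :=
  if (expo q == 0%N) && (q < 1) then [::] else [:: q - 1 / 2 ^+ expo q].
Definition ropt (q : rat) : seq rat :=
  if (expo q == 0%N) && (-1 < q) then [::] else [:: q + 1 / 2 ^+ expo q].

Lemma dy_num q : dyadic q -> q * 2 ^+ expo q = (numq q)%:~R.
Proof.
case=> k hk; rewrite numqE hk /expo hk absz_nat pfactorK //.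
by rewrite two_pow.
Qed.

Lemma dy_den q : dyadic q -> `|denq q|%N = (2 ^ expo q)%N.
Proof. by case=> k hk; rewrite /expo hk absz_nat pfactorK. Qed.

Lemma canon_opts q : dyadic q -> canon q = Game (map canon (lopt q)) (map canon (ropt q)).
Proof.
move=> dq; have hn := dy_num dq.
have hodd : (0 < expo q)%N -> odd `|numq q|%N.
  move=> h; have := coprime_num_den q; rewrite dy_den //.
  by rewrite coprime_pexpr // coprimen2.
rewrite /lopt /ropt; rewrite [canon q]/canon -/(expo q).
case ek: (expo q) hn hodd => [|k] hn hodd /=.
  rewrite expr0 mulr1 in hn; move: (numq q) hn => a hn; rewrite hn expr0 divr1.
  case: a {hn} => [[|n]|n] /=.
  - by rewrite ?ltr01 ?ltrN10.
  - have h0 : 0 <= (Posz n)%:~R :> rat by rewrite ler0z.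
    have e : (Posz n.+1)%:~R = (n%:~R + 1 : rat) by rewrite -addn1 PoszD intrD.
    have -> : (Posz n.+1)%:~R < 1 :> rat = false.
      by rewrite e; apply/negbTE; rewrite -leNgt; lra.
    have -> : -1 < (Posz n.+1)%:~R :> rat by rewrite e; lra.
    rewrite /=; have -> : iter n (fun g => Game [:: g] [::]) gzero = canon_int n by [].
    by rewrite -canon_int_eq e addrK.
  - have h0 : 0 <= (Posz n)%:~R :> rat by rewrite ler0z.
    have e : (Negz n)%:~R = - (Posz n)%:~R - 1 :> rat.
      by rewrite NegzE intrN -addn1 PoszD intrD opprD.
    have -> : (Negz n)%:~R < 1 :> rat by rewrite e; lra.
    have -> : -1 < (Negz n)%:~R :> rat = false.
      by rewrite e; apply/negbTE; rewrite -leNgt; lra.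
    have it : iter n (fun g => Game [::] [:: g]) gzero = canon_int (- (Posz n)) by case: n {h0 e}.
    rewrite /= it -canon_int_eq intrN e; congr (Game [::] [:: canon _]); ring.
have := hodd isT; move: (numq q) hn => a hn ha.
rewrite ha; case: (odd_int ha) => w hw.
rewrite !canon_dy_canon; congr (Game [:: canon _] [:: canon _]).
- have -> : ((a - 1) %/ 2)%Z = w by rewrite hw addrK mulrC mulzK.
  have hq : q = a%:~R / 2 ^+ k.+1 by rewrite -hn mulfK // two_pow_neq0.
  rewrite hq hw intrD intrM exprS; field; exact: two_pow_neq0.
- have -> : ((a + 1) %/ 2)%Z = w + 1.
    by rewrite hw -addrA -[1 + 1]/(2%:Z) -[X in _ + X]mulr1 -mulrDr mulrC mulzK.
  have hq : q = a%:~R / 2 ^+ k.+1 by rewrite -hn mulfK // two_pow_neq0.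
  rewrite hq hw !intrD intrM exprS; field; exact: two_pow_neq0.
Qed.

Lemma lopt_val q x : x \in lopt q -> x = q - 1 / 2 ^+ expo q.
Proof. by rewrite /lopt; case: ifP => _; rewrite ?inE // => /eqP. Qed.
Lemma ropt_val q x : x \in ropt q -> x = q + 1 / 2 ^+ expo q.
Proof. by rewrite /ropt; case: ifP => _; rewrite ?inE // => /eqP. Qed.

Lemma unit_gt0 k : 0 < 1 / (2 ^+ k : rat).
Proof. by rewrite div1r invr_gt0 two_pow_gt0. Qed.

Lemma lopt_lt q x : x \in lopt q -> x < q.
Proof. move/lopt_val => ->; have := unit_gt0 (expo q); lra. Qed.
Lemma ropt_gt q x : x \in ropt q -> q < x.
Proof. move/ropt_val => ->; have := unit_gt0 (expo q); lra. Qed.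

Lemma lopt_dy q x : dyadic q -> x \in lopt q -> dyadic x.
Proof.
move=> dq /lopt_val ->; apply: (proj1 (isint2_dy (j := expo q) _)).
by apply: isint2D; [exact: dy_isint2 | apply: isint2N; exact: isint2_unit].
Qed.
Lemma ropt_dy q x : dyadic q -> x \in ropt q -> dyadic x.
Proof.
move=> dq /ropt_val ->; apply: (proj1 (isint2_dy (j := expo q) _)).
by apply: isint2D; [exact: dy_isint2 | exact: isint2_unit].
Qed.

Lemma tree_fact x y : dyadic x -> dyadic y -> x < y ->
  has (fun yl => x <= yl) (lopt y) || has (fun xr => xr <= y) (ropt x).
Proof.
move=> dx dy xy; have hx := dy_isint2 dx; have hy := dy_isint2 dy.
case: (leqP (expo x) (expo y)) => hij.
- have hx' := isint2_le hx hij.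
  case E: ((expo y == 0%N) && (y < 1)).
  + case/andP: E => /eqP ej y1.
    have ei : expo x = 0%N by apply/eqP; rewrite -leqn0 -ej.
    rewrite ej in hy; rewrite ei in hx.
    have h1 : isint2 1 0 by exists 1; rewrite expr0 mulr1.
    have := isint2_step hy h1 y1; have := isint2_step hx hy xy.
    rewrite expr0 divr1 => s1 s2.
    rewrite /ropt ei eqxx /= ifF; last by apply/negbTE; rewrite -leNgt; lra.
    by apply/orP; right; rewrite /= expr0 divr1 s1.
  + rewrite /lopt E /= orbC; apply/orP; right.
    have := isint2_step hx' hy xy; rewrite ?orbF; lra.
- have hy' := isint2_le hy (ltnW hij).
  have nz : (expo x == 0%N) = false by apply/negbTE; rewrite -lt0n; apply: leq_ltn_trans hij.
  rewrite /ropt nz /=; apply/orP; right; rewrite ?orbF.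
  have := isint2_step hx hy' xy; lra.
Qed.

Fixpoint gdepth (G : game) : nat :=
  let: Game L R := G in (foldr maxn 0 (map gdepth L ++ map gdepth R)).+1.

Lemma foldr_max_ge (n : nat) s : n \in s -> (n <= foldr maxn 0 s)%N.
Proof.
elim: s => //= a s IH; rewrite inE => /orP [/eqP ->|/IH h]; first exact: leq_maxl.
exact: leq_trans h (leq_maxr _ _).
Qed.

Lemma depth_l q x : dyadic q -> x \in lopt q -> (gdepth (canon x) < gdepth (canon q))%N.
Proof.
move=> dq xi; rewrite [X in (_ < gdepth X)%N](canon_opts dq) /= ltnS.
apply: foldr_max_ge; rewrite mem_cat; apply/orP; left.
by rewrite -map_comp; apply: (map_f (gdepth \o canon)).
Qed.

Lemma depth_r q x : dyadic q -> x \in ropt q -> (gdepth (canon x) < gdepth (canon q))%N.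
Proof.
move=> dq xi; rewrite [X in (_ < gdepth X)%N](canon_opts dq) /= ltnS.
apply: foldr_max_ge; rewrite mem_cat; apply/orP; right.
by rewrite -map_comp; apply: (map_f (gdepth \o canon)).
Qed.

Lemma canon_le_n n : forall x y, dyadic x -> dyadic y ->
  (gdepth (canon x) + gdepth (canon y) <= n)%N -> le (canon x) (canon y) = (x <= y).
Proof.
elim: n => [|n IH] x y dx dy hn.
  by move: hn; rewrite (canon_opts dx) (canon_opts dy).
rewrite (canon_opts dx) (canon_opts dy) le_rec -(canon_opts dx) -(canon_opts dy) !all_map.
have e1 : all (fun xl => ~~ le (canon y) (canon xl)) (lopt x) = all (fun xl => ~~ (y <= xl)) (lopt x).
  apply: eq_in_all => z zi /=; rewrite IH //; first exact: lopt_dy zi.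
  have := depth_l dx zi; rewrite -ltnS; move: hn; lia.
have e2 : all (fun yr => ~~ le (canon yr) (canon x)) (ropt y) = all (fun yr => ~~ (yr <= x)) (ropt y).
  apply: eq_in_all => z zi /=; rewrite IH //; first exact: ropt_dy zi.
  have := depth_r dy zi; rewrite -ltnS; move: hn; lia.
rewrite e1 e2; apply/idP/idP.
- case/andP => a1 a2; rewrite leNgt; apply/negP => yx.
  case/orP: (tree_fact dy dx yx) => /hasP [z zi hz].
  + by have := allP a1 z zi; rewrite hz.
  + by have := allP a2 z zi; rewrite hz.
- move=> xy; apply/andP; split; apply/allP => z zi /=; rewrite -ltNge.
  + exact: lt_le_trans (lopt_lt zi) xy.
  + exact: le_lt_trans xy (ropt_gt zi).
Qed.

Lemma canon_le x y : dyadic x -> dyadic y -> le (canon x) (canon y) = (x <= y).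
Proof. by move=> dx dy; apply: (canon_le_n (n := (gdepth (canon x) + gdepth (canon y))%N)). Qed.

Lemma unit_le a b : (a <= b)%N -> 1 / 2 ^+ b <= 1 / (2 ^+ a : rat).
Proof.
move=> ab; rewrite !div1r lef_pV2 ?posrE ?two_pow_gt0 //.
by rewrite ler_eXn2l // ltr1n.
Qed.

Lemma unit_lt a b : (a < b)%N -> 1 / 2 ^+ b < 1 / (2 ^+ a : rat).
Proof.
move=> ab; rewrite !div1r ltf_pV2 ?posrE ?two_pow_gt0 //.
by rewrite ltr_eXn2l // ltr1n.
Qed.

Lemma unit_S b : 1 / (2 ^+ b : rat) = 1 / 2 ^+ b.+1 + 1 / 2 ^+ b.+1.
Proof. rewrite exprS; field; exact: two_pow_neq0. Qed.

Lemma le_rec' G H : le G H =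
  all (fun gl => ~~ le H gl) (leftopts G) && all (fun hr => ~~ le hr G) (rightopts H).
Proof. by case: G => ? ?; case: H => ? ?; rewrite le_rec. Qed.

Lemma lopts_canon q : dyadic q -> leftopts (canon q) = map canon (lopt q).
Proof. by move=> dq; rewrite {1}(canon_opts dq). Qed.
Lemma ropts_canon q : dyadic q -> rightopts (canon q) = map canon (ropt q).
Proof. by move=> dq; rewrite {1}(canon_opts dq). Qed.

Lemma dy_shift x k : dyadic x -> dyadic (x + 1 / 2 ^+ k) /\ dyadic (x - 1 / 2 ^+ k).
Proof.
move=> dx; have hx := isint2_le (dy_isint2 dx) (leq_addr k (expo x)).
have hu := isint2_le (isint2_unit k) (leq_addl (expo x) k).
split; apply: (proj1 (isint2_dy (j := (expo x + k)%N) _)); apply: isint2D => //.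
exact: isint2N.
Qed.

Lemma expo_odd_shift m p : dyadic m -> (expo m <= p)%N ->
  expo (m + 1 / 2 ^+ p.+1) = p.+1 /\ expo (m - 1 / 2 ^+ p.+1) = p.+1.
Proof.
move=> dm hp; case: (isint2_le (dy_isint2 dm) hp) => z hz.
have t0 := two_pow_neq0 p.
have hm : m = z%:~R / 2 ^+ p by rewrite -hz mulfK.
split.
- apply: (proj2 (odd_expo (a := 2 * z + 1) _ _)); first lia.
  rewrite intrD intrM hm exprS; field; exact: t0.
- apply: (proj2 (odd_expo (a := 2 * z - 1) _ _)); first lia.
  rewrite intrB intrM hm exprS; field; exact: t0.
Qed.

Arguments le : simpl never.
Arguments canon : simpl never.
Arguments gneg : simpl never.
Arguments gadd : simpl never.

Notation u k := (1 / (2 ^+ k) : rat).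

Lemma lra_aux (m a b c : rat) : a <= c -> a = b + b -> 0 < b -> m < m - b + c.
Proof. lra. Qed.

Lemma le_rw G H : ~~ rw (gadd G (gneg H)) = le H G. Proof. by []. Qed.

Unset Implicit Arguments.
Theorem lemma3p3 (m : rat) (p : nat) :
  dyadic m ->
  balanced m (- (1 / (2 ^+ p))) ->
  eqdom (gord (ball m (- (1 / (2 ^+ p)))) zero_ul) (ball m (- (1 / (2 ^+ p.+1)))) /\
  balanced m (- (1 / (2 ^+ p.+1))).
Proof.
move=> dm.
rewrite /balanced /ball !opprK /geq.
have he := unit_S p.
have e2p := unit_gt0 p.+1.
have ep := unit_gt0 p.
have [dhi dlo] := dy_shift p dm.
have [dhi2 dlo2] := dy_shift p.+1 dm.
set M := canon m.
set B := Game [:: canon (m - u p)] [:: canon (m + u p)].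
move=> /balancedE [h1 h2].
have cmp : le B M || le M B.
  apply/orP; case: (boolP (has (fun r => le (canon r) B) (ropt m))) => [/hasP [mr mri hmr] | hn].
  - right; rewrite le_rec' /M (lopts_canon dm) all_map /=; apply/andP; split.
      apply/allP => ml mli /=; apply/negP => hml.
      have dmr := ropt_dy dm mri; have dml := lopt_dy dm mli.
      have := gle_trans hmr hml; rewrite canon_le //.
      have := lopt_lt mli; have := ropt_gt mri; lra.
    by rewrite canon_le // andbT -ltNge; lra.
  - left; rewrite le_rec' /M (ropts_canon dm) all_map /=; apply/andP; split.
      by rewrite canon_le // andbT -ltNge; lra.
    by move: hn; rewrite -all_predC.
have [leBM leMB] : le B M /\ le M B.
  case/orP: cmp => h.
  - split => //; rewrite -(le_addr M B M); apply: gle_trans h2 _.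
    by rewrite le_addl.
  - split => //; rewrite -(le_addr B M B); apply: gle_trans h1 _.
    by rewrite le_addl.
have kp : (expo m <= p)%N.
  rewrite leqNgt; apply/negP => pk.
  have k0 : expo m != 0%N by rewrite -lt0n; apply: leq_ltn_trans pk.
  have lm : lopt m = [:: m - u (expo m)] by rewrite /lopt (negbTE k0).
  have dml : dyadic (m - u (expo m)) by apply: (lopt_dy dm); rewrite lm mem_head.
  move: leMB; rewrite le_rec' /M (lopts_canon dm) lm /= => /andP [/andP [hml _] _].
  move/negP: hml; apply; rewrite le_rec' /= canon_le // andbT; apply/andP; split.
    by rewrite -ltNge; have := unit_lt pk; lra.
  rewrite (ropts_canon dml) all_map; apply/allP => r ri /=; apply/negP => hr.
  have dr := ropt_dy dml ri.
  have := gle_trans hr leBM; rewrite /M canon_le //; apply/negP; rewrite -ltNge.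
  case ek: (expo m) pk k0 lm dml ri => [|k'] // pk _ lm dml ri.
  have hodd : odd `|numq m|%N.
    have := coprime_num_den m; rewrite dy_den //.
    by rewrite ek coprime_pexpr // coprimen2.
  have hn := dy_num dm; rewrite ek in hn.
  case: (odd_int hodd) => w hw; rewrite hw in hn.
  have hi2 : isint2 (m - u k'.+1) k'.
    exists w; have t0 := two_pow_neq0 k'.
    have hm : m = (2 * w + 1)%:~R / 2 ^+ k'.+1 by rewrite -hn mulfK // two_pow_neq0.
    rewrite hm intrD intrM exprS; field; exact: t0.
  have ex := proj2 (isint2_dy hi2).
  rewrite (ropt_val ri).
  exact: lra_aux (unit_le ex) (unit_S k') (unit_gt0 k'.+1).
have lmv : forall ml, ml \in lopt m -> ml <= m - u p.
  move=> ml /lopt_val ->; have := unit_le kp; lra.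
have rmv : forall mr, mr \in ropt m -> m + u p <= mr.
  move=> mr /ropt_val ->; have := unit_le kp; lra.
have [ehi2 elo2] := expo_odd_shift dm kp.
have nz : (p.+1 == 0)%N = false by [].
have Llo2 : lopt (m - u p.+1) = [:: m - u p].
  by rewrite /lopt elo2 nz /=; congr [:: _]; lra.
have Rlo2 : ropt (m - u p.+1) = [:: m].
  by rewrite /ropt elo2 nz /=; congr [:: _]; lra.
have Lhi2 : lopt (m + u p.+1) = [:: m].
  by rewrite /lopt ehi2 nz /=; congr [:: _]; lra.
have Rhi2 : ropt (m + u p.+1) = [:: m + u p].
  by rewrite /ropt ehi2 nz /=; congr [:: _]; lra.
set B' := Game [:: canon (m - u p.+1)] [:: canon (m + u p.+1)].
have [leB'M leMB'] : le B' M /\ le M B'.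
  split.
  - rewrite le_rec' /M (ropts_canon dm) all_map /= canon_le // andbT; apply/andP; split.
      by rewrite -ltNge; lra.
    apply/allP => mr mri /=; have dmr := ropt_dy dm mri.
    apply/negP; rewrite le_rec' => /andP [_] /=.
    by rewrite andbT canon_le // => /negP; apply; have := rmv mr mri; lra.
  - rewrite le_rec' /M (lopts_canon dm) all_map /= canon_le // andbT; apply/andP; split; last first.
      by rewrite -ltNge; lra.
    apply/allP => ml mli /=; have dml := lopt_dy dm mli.
    apply/negP; rewrite le_rec' => /andP [] /=.
    by rewrite andbT canon_le // => /negP h _; apply: h; have := lmv ml mli; lra.
split; last first.
  rewrite /Defs.geq; apply/balancedE; split.
  - by apply: (gle_trans (H := gadd M B')); [rewrite le_addr | rewrite le_addl].
  - by apply: (gle_trans (H := gadd B' M)); [rewrite le_addr | rewrite le_addl].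
rewrite /M in leBM leMB.
have Eg : gord B zero_ul = Game [:: canon (m - u p); Game [:: canon (m - u p)] [:: canon (m + u p); B]]
                                [:: canon (m + u p); Game [:: canon (m - u p); B] [:: canon (m + u p)]] by [].
rewrite Eg /eqdom /B' [gneg (Game _ _)]gnegE /=.
split; [|split; [|split]].
- move=> gl [<-|[<-|[]]]; exists (gneg (canon (m - u p.+1))); rewrite ?le_lw //; try by left.
  + by rewrite canon_le //; lra.
  + rewrite le_rec' /= (ropts_canon dlo2) Rlo2 /= canon_le // andbT; apply/andP; split.
      by rewrite -ltNge; lra.
    by rewrite andbT le_rec' /= leBM /= !andbF.
- move=> gr [<-|[<-|[]]]; exists (gneg (canon (m + u p.+1))); rewrite ?le_rw //; try by left.
  + by rewrite canon_le //; lra.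
  + rewrite le_rec' /= (lopts_canon dhi2) Lhi2 /= canon_le // andbT; apply/andP; split.
      by rewrite le_rec' /= leMB /= !andbF.
    by rewrite -ltNge; lra.
- move=> y [<-|[]]; exists (Game [:: canon (m - u p); B] [:: canon (m + u p)]); first by right; left.
  rewrite le_lw le_rec' /= (ropts_canon dhi2) Rhi2 /= canon_le // andbT; apply/andP; split.
    apply/andP; split; first by rewrite -ltNge; lra.
    apply/negP => h; have := gle_trans h leBM; rewrite /M canon_le //; apply/negP; rewrite -ltNge; lra.
  by rewrite le_rec' /= gle_refl /= ?andbF.
- move=> x [<-|[]]; exists (Game [:: canon (m - u p)] [:: canon (m + u p); B]); first by right; left.
  rewrite le_rw le_rec' /= (lopts_canon dlo2) Llo2 /= andbT; apply/andP; split.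
    by rewrite le_rec' /= gle_refl /= ?andbF.
  rewrite canon_le // andbT; apply/andP; split; first by rewrite -ltNge; lra.
  apply/negP => h; have := gle_trans leMB h; rewrite /M canon_le //; apply/negP; rewrite -ltNge; lra.
Qed.
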